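(* (i) Let $(T,R)$ be a time frame. Then $([0,1]^T;f_R,f_{R^{-1}})$, where $[0,1]^T$ is the power of the standard Pavelka algebra, is a tense Pavelka algebra. (ii) Let $(\mathbf A,G,H)$ be a tense Pavelka algebra whose underlying Pavelka algebra $\mathbf A$ is semisimple. Then, with $T=\mathrm{Spec_M}\mathbf A$ and $R(F,F')=\bigwedge_{a\in A}(G(a)/F'\rightarrow a/F)$ for $F,F'\in T$, the natural embedding $n_{\mathbf A}\colon A\to[0,1]^T$ is an injective homomorphism of Pavelka algebras satisfying $n_{\mathbf A}(G(x))=f_R(n_{\mathbf A}(x))$ and $n_{\mathbf A}(H(x))=f_{R^{-1}}(n_{\mathbf A}(x))$ for all $x\in A$; i.e. $(\mathbf A,G,H)$ embeds into the tense Pavelka algebra induced by the time frame $(T,R)$.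
   Context: An MV-algebra $(A;\oplus,\neg,0)$ carries derived operations $1=\neg0$, $x\cdot y=\neg(\neg x\oplus\neg y)$, $x\rightarrow y=\neg x\oplus y$, $x\vee y=\neg(\neg x\oplus y)\oplus y$, $x\wedge y=\neg(\neg x\vee\neg y)$, order $x\le y$ iff $\neg x\oplus y=1$. The standard MV-algebra is $[0,1]$ with $x\oplus y=\min\{x+y,1\}$, $\neg x=1-x$. A Pavelka algebra is $\mathbf A=(A;\oplus,\neg,\{\mathbf r\mid r\in[0,1]\cap\mathbb Q\})$ with $(A;\oplus,\neg,\mathbf 0)$ an MV-algebra, $\mathbf r\oplus\mathbf s=\mathbf t$ whenever $\min\{r+s,1\}=t$, $\neg\mathbf r=\mathbf s$ whenever $1-r=s$. The standard Pavelka algebra is $[0,1]$ with $\mathbf r$ interpreted as $r$; $[0,1]^T$ is its power. Filters are filters of the MV-reduct; $\mathrm{Spec_M}\mathbf A$ is the set of maximal proper filters; $\mathbf A/F$ embeds uniquely into $[0,1]$ and $x/F$ is identified with its image. Semisimple: MV-reduct is a subdirect product of simple MV-algebras. Natural embedding $n_{\mathbf A}(x)(F)=x/F$. A tense Pavelka algebra is $(\mathbf A,G,H)$ with $\mathbf A$ a Pavelka algebra and $G,H\colon A\to A$ such that for all $x,y\in A$ and all constants $\mathbf r$: (PT1) $G(x\wedge y)=G(x)\wedge G(y)$, $H(x\wedge y)=H(x)\wedge H(y)$; (PT2) $\mathbf r\rightarrow G(x)=G(\mathbf r\rightarrow x)$, $\mathbf r\rightarrow H(x)=H(\mathbf r\rightarrow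 x)$; (PT3) $\neg H(\neg G(x))\le x$ and $\neg G(\neg H(x))\le x$. A time frame is a pair $(T,R)$ with $T$ a set and $R\colon T\times T\to[0,1]$; $R^{-1}(s,t)=R(t,s)$. For $S\colon T\times T\to[0,1]$, $f_S\colon[0,1]^T\to[0,1]^T$, $f_S(x)(t)=\bigwedge_{s\in T}(S(s,t)\rightarrow x(s))$. *)

(* Defs.v *)
From Stdlib Require Import Reals Lra QArith Qreals ClassicalEpsilon.
Open Scope R_scope.

Definition I01 : Type := {x : R | 0 <= x <= 1}.
Definition rat01 : Type := {r : R | (exists q : Q, Q2R q = r) /\ 0 <= r <= 1}.

Lemma Q2R_0 : Q2R 0%Q = 0.
Proof. unfold Q2R; simpl; lra. Qed.
Lemma Q2R_1 : Q2R 1%Q = 1.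
Proof. unfold Q2R; simpl; field. Qed.

Definition q0 : rat01 :=
  exist _ 0 (conj (ex_intro _ 0%Q Q2R_0) (conj (Rle_refl 0) Rle_0_1)).

Lemma oplus01_range (x y : I01) :
  0 <= Rmin (proj1_sig x + proj1_sig y) 1 <= 1.
Proof.
  destruct x as [x Hx], y as [y Hy]; simpl.
  unfold Rmin; destruct (Rle_dec (x + y) 1); lra.
Qed.
Lemma neg01_range (x : I01) : 0 <= 1 - proj1_sig x <= 1.
Proof. destruct x as [x Hx]; simpl; lra. Qed.

Definition i_oplus (x y : I01) : I01 := exist _ _ (oplus01_range x y).
Definition i_neg (x : I01) : I01 := exist _ _ (neg01_range x).
Definition i_const (r : rat01) : I01 := exist _ (proj1_sig r) (proj2 (proj2_sig r)).
Definition i_one : I01 := exist _ 1 (conj Rle_0_1 (Rle_refl 1)).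
Definition i_imp (x y : I01) : I01 := i_oplus (i_neg x) y.

Definition mv_one {A : Type} (neg : A -> A) (zero : A) : A := neg zero.
Definition mv_mul {A : Type} (oplus : A -> A -> A) (neg : A -> A) (x y : A) : A :=
  neg (oplus (neg x) (neg y)).
Definition mv_imp {A : Type} (oplus : A -> A -> A) (neg : A -> A) (x y : A) : A :=
  oplus (neg x) y.
Definition mv_join {A : Type} (oplus : A -> A -> A) (neg : A -> A) (x y : A) : A :=
  oplus (neg (oplus (neg x) y)) y.
Definition mv_meet {A : Type} (oplus : A -> A -> A) (neg : A -> A) (x y : A) : A :=
  neg (mv_join oplus neg (neg x) (neg y)).
Definition mv_le {A : Type} (oplus : A -> A -> A) (neg : A -> A) (zero : A) (x y : A) : Prop :=
  oplus (neg x) y = mv_one neg zero.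

Definition is_MV {A : Type} (oplus : A -> A -> A) (neg : A -> A) (zero : A) : Prop :=
  (forall x y z, oplus x (oplus y z) = oplus (oplus x y) z) /\
  (forall x y, oplus x y = oplus y x) /\
  (forall x, oplus x zero = x) /\
  (forall x, neg (neg x) = x) /\
  (forall x, oplus x (neg zero) = neg zero) /\
  (forall x y, oplus (neg (oplus (neg x) y)) y = oplus (neg (oplus (neg y) x)) x).

Definition MV_hom {A B : Type} (oplus : A -> A -> A) (neg : A -> A) (zero : A)
  (oplus' : B -> B -> B) (neg' : B -> B) (zero' : B) (h : A -> B) : Prop :=
  (forall x y, h (oplus x y) = oplus' (h x) (h y)) /\
  (forall x, h (neg x) = neg' (h x)) /\
  h zero = zero'.

Definition is_filter {A : Type} (oplus : A -> A -> A) (neg : A -> A) (zero : A)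
  (F : A -> Prop) : Prop :=
  F (mv_one neg zero) /\
  (forall x y, F x -> mv_le oplus neg zero x y -> F y) /\
  (forall x y, F x -> F y -> F (mv_mul oplus neg x y)).

Definition proper_filter {A : Type} (oplus : A -> A -> A) (neg : A -> A) (zero : A)
  (F : A -> Prop) : Prop :=
  is_filter oplus neg zero F /\ exists x, ~ F x.

Definition maximal_filter {A : Type} (oplus : A -> A -> A) (neg : A -> A) (zero : A)
  (F : A -> Prop) : Prop :=
  proper_filter oplus neg zero F /\
  forall G, proper_filter oplus neg zero G -> (forall x, F x -> G x) -> forall x, G x -> F x.

Definition simple_MV {A : Type} (oplus : A -> A -> A) (neg : A -> A) (zero : A) : Prop :=
  is_MV oplus neg zero /\ zero <> mv_one neg zero /\
  forall F, is_filter oplus neg zero F ->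
    (forall x, F x -> x = mv_one neg zero) \/ (forall x, F x).

(** semisimple: subdirect product of simple MV-algebras *)
Definition semisimple {A : Type} (oplus : A -> A -> A) (neg : A -> A) (zero : A) : Prop :=
  exists (I : Type) (B : I -> Type) (boplus : forall i, B i -> B i -> B i)
         (bneg : forall i, B i -> B i) (bzero : forall i, B i) (h : forall i, A -> B i),
    (forall i, simple_MV (boplus i) (bneg i) (bzero i)) /\
    (forall i, MV_hom oplus neg zero (boplus i) (bneg i) (bzero i) (h i)) /\
    (forall i (b : B i), exists a, h i a = b) /\
    (forall x y, (forall i, h i x = h i y) -> x = y).

(** * Pavelka algebras: operations oplus, neg and constants c : rat01 -> A;
    the MV zero is the constant c q0 *)
Definition is_pavelka {A : Type} (oplus : A -> A -> A) (neg : A -> A) (c : rat01 -> A) : Prop :=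
  is_MV oplus neg (c q0) /\
  (forall r s t : rat01, Rmin (proj1_sig r + proj1_sig s) 1 = proj1_sig t ->
       oplus (c r) (c s) = c t) /\
  (forall r s : rat01, 1 - proj1_sig r = proj1_sig s -> neg (c r) = c s).

Definition pavelka_hom {A B : Type} (oplus : A -> A -> A) (neg : A -> A) (c : rat01 -> A)
  (oplus' : B -> B -> B) (neg' : B -> B) (c' : rat01 -> B) (h : A -> B) : Prop :=
  (forall x y, h (oplus x y) = oplus' (h x) (h y)) /\
  (forall x, h (neg x) = neg' (h x)) /\
  (forall r, h (c r) = c' r).

Definition is_tense_pavelka {A : Type} (oplus : A -> A -> A) (neg : A -> A) (c : rat01 -> A)
  (G H : A -> A) : Prop :=
  is_pavelka oplus neg c /\
  (forall x y, G (mv_meet oplus neg x y) = mv_meet oplus neg (G x) (G y)) /\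
  (forall x y, H (mv_meet oplus neg x y) = mv_meet oplus neg (H x) (H y)) /\
  (forall (r : rat01) x, mv_imp oplus neg (c r) (G x) = G (mv_imp oplus neg (c r) x)) /\
  (forall (r : rat01) x, mv_imp oplus neg (c r) (H x) = H (mv_imp oplus neg (c r) x)) /\
  (forall x, mv_le oplus neg (c q0) (neg (H (neg (G x)))) x) /\
  (forall x, mv_le oplus neg (c q0) (neg (G (neg (H x)))) x).

Definition pw_oplus (T : Type) (x y : T -> I01) : T -> I01 := fun t => i_oplus (x t) (y t).
Definition pw_neg (T : Type) (x : T -> I01) : T -> I01 := fun t => i_neg (x t).
Definition pw_const (T : Type) (r : rat01) : T -> I01 := fun _ => i_const r.

Definition is_inf01 {I : Type} (f : I -> I01) (m : I01) : Prop :=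
  (forall i, proj1_sig m <= proj1_sig (f i)) /\
  (forall m' : I01, (forall i, proj1_sig m' <= proj1_sig (f i)) -> proj1_sig m' <= proj1_sig m).
Definition Iinf {I : Type} (f : I -> I01) : I01 :=
  epsilon (inhabits i_one) (is_inf01 f).

Definition Rinv_frame {T : Type} (S : T -> T -> I01) : T -> T -> I01 := fun s t => S t s.
Definition f_S {T : Type} (S : T -> T -> I01) (x : T -> I01) : T -> I01 :=
  fun t => Iinf (fun s => i_imp (S s t) (x s)).

Definition SpecM {A : Type} (oplus : A -> A -> A) (neg : A -> A) (c : rat01 -> A) : Type :=
  {F : A -> Prop | maximal_filter oplus neg (c q0) F}.

(** h is (the composite A -> A/F -> [0,1] of) the embedding of A/F into [0,1] *)
Definition quot_hom {A : Type} (oplus : A -> A -> A) (neg : A -> A) (c : rat01 -> A)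
  (F : A -> Prop) (h : A -> I01) : Prop :=
  pavelka_hom oplus neg c i_oplus i_neg i_const h /\
  (forall x, proj1_sig (h x) = 1 <-> F x).

(** x/F, identified with its image in [0,1] *)
Definition quot {A : Type} (oplus : A -> A -> A) (neg : A -> A) (c : rat01 -> A)
  (F : A -> Prop) (x : A) : I01 :=
  epsilon (inhabits (fun _ : A => i_one)) (quot_hom oplus neg c F) x.

Definition nat_emb {A : Type} (oplus : A -> A -> A) (neg : A -> A) (c : rat01 -> A)
  (x : A) : SpecM oplus neg c -> I01 :=
  fun F => quot oplus neg c (proj1_sig F) x.

Definition canon_frame {A : Type} (oplus : A -> A -> A) (neg : A -> A) (c : rat01 -> A)
  (G : A -> A) : SpecM oplus neg c -> SpecM oplus neg c -> I01 :=
  fun F F' => Iinf (fun a : A =>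
    i_imp (quot oplus neg c (proj1_sig F') (G a)) (quot oplus neg c (proj1_sig F) a)).

(* Main.v *)
Require Import Defs.
From Stdlib Require Import Reals QArith Qreals ClassicalEpsilon Lra Lia Classical FunctionalExtensionality ProofIrrelevance PropExtensionality.
From mathcomp Require classical_sets.

Section MV.
Variables (A : Type) (op : A -> A -> A) (ng : A -> A) (z : A).
Hypothesis HMV : is_MV op ng z.
Set Default Proof Using "All".

Local Notation one := (mv_one ng z).
Local Notation le := (mv_le op ng z).
Local Notation mul := (mv_mul op ng).
Local Notation imp := (mv_imp op ng).
Local Notation join := (mv_join op ng).
Local Notation meet := (mv_meet op ng).

Lemma A1 x y w : op x (op y w) = op (op x y) w. Proof. apply (proj1 HMV). Qed.
Lemma A2 x y : op x y = op y x. Proof. apply (proj1 (proj2 HMV)). Qed.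
Lemma A3 x : op x z = x. Proof. apply (proj1 (proj2 (proj2 HMV))). Qed.
Lemma A4 x : ng (ng x) = x. Proof. apply (proj1 (proj2 (proj2 (proj2 HMV)))). Qed.
Lemma A5 x : op x one = one. Proof. apply (proj1 (proj2 (proj2 (proj2 (proj2 HMV))))). Qed.
Lemma A6 x y : op (ng (op (ng x) y)) y = op (ng (op (ng y) x)) x.
Proof. apply (proj2 (proj2 (proj2 (proj2 (proj2 HMV))))). Qed.

Lemma neg_one : ng one = z. Proof. unfold mv_one; apply A4. Qed.
Lemma zero_l x : op z x = x. Proof. rewrite A2; apply A3. Qed.
Lemma one_l x : op one x = one. Proof. rewrite A2; apply A5. Qed.
Lemma compl_l x : op (ng x) x = one.
Proof.
  pose proof (A6 x one) as H. rewrite A5 in H. rewrite neg_one, zero_l in H.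
  symmetry; exact H.
Qed.
Lemma compl_r x : op x (ng x) = one. Proof. rewrite A2; apply compl_l. Qed.

Lemma le_refl x : le x x. Proof. apply compl_l. Qed.
Lemma le_add x w : le x (op x w).
Proof. unfold mv_le. rewrite A1, compl_l, one_l. reflexivity. Qed.
Lemma le_ex x y : le x y -> y = op x (ng (op (ng y) x)).
Proof.
  unfold mv_le; intro H. rewrite A2, A6, H, neg_one, zero_l. reflexivity.
Qed.
Lemma le_exP x y : le x y <-> exists w, y = op x w.
Proof.
  split. intro H; eexists; apply le_ex, H.
  intros [w ->]; apply le_add.
Qed.
Lemma le_trans x y w : le x y -> le y w -> le x w.
Proof.
  rewrite !le_exP. intros [a ->] [b ->]. exists (op a b). apply eq_sym, A1.
Qed.
Lemma le_antisym x y : le x y -> le y x -> x = y.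
Proof.
  intros H1 H2. rewrite (le_ex x y H1). unfold mv_le in H2. rewrite H2, neg_one, A3. reflexivity.
Qed.
Lemma le_top x : le x one. Proof. apply A5. Qed.
Lemma le_bot x : le z x. Proof. unfold mv_le. fold (mv_one ng z). apply one_l. Qed.
Lemma add_mono x y w : le x y -> le (op x w) (op y w).
Proof.
  rewrite !le_exP. intros [a ->]. exists a. rewrite <- !A1, (A2 w a). reflexivity.
Qed.
Lemma add_mono_r x y w : le x y -> le (op w x) (op w y).
Proof. rewrite (A2 w x), (A2 w y). apply add_mono. Qed.
Lemma add_mono2 x y x' y' : le x y -> le x' y' -> le (op x x') (op y y').
Proof. intros; eapply le_trans. apply add_mono; eauto. apply add_mono_r; auto. Qed.
Lemma neg_anti x y : le x y -> le (ng y) (ng x).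
Proof. unfold mv_le. rewrite A4, A2. auto. Qed.
Lemma neg_anti' x y : le (ng y) (ng x) -> le x y.
Proof. intro H. apply neg_anti in H. rewrite !A4 in H. exact H. Qed.
Lemma mul_comm x y : mul x y = mul y x. Proof. unfold mv_mul. rewrite A2. auto. Qed.
Lemma mul_assoc x y w : mul x (mul y w) = mul (mul x y) w.
Proof. unfold mv_mul. rewrite !A4, A1. auto. Qed.
Lemma resid x y w : le (mul x y) w <-> le x (imp y w).
Proof. unfold mv_le, mv_mul, mv_imp. rewrite A4, A1. tauto. Qed.
Lemma mul_mono x y w : le x y -> le (mul x w) (mul y w).
Proof. intro H. unfold mv_mul. apply neg_anti, add_mono, neg_anti, H. Qed.
Lemma mul_mono_r x y w : le x y -> le (mul w x) (mul w y).
Proof. rewrite (mul_comm w x), (mul_comm w y). apply mul_mono. Qed.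
Lemma mul_mono2 x y x' y' : le x y -> le x' y' -> le (mul x x') (mul y y').
Proof. intros; eapply le_trans. apply mul_mono; eauto. apply mul_mono_r; auto. Qed.
Lemma mul_le x y : le (mul x y) x.
Proof. apply resid. unfold mv_imp. rewrite A2. apply le_add. Qed.
Lemma mul_le_r x y : le (mul x y) y.
Proof. rewrite mul_comm. apply mul_le. Qed.
Lemma mul_one x : mul x one = x.
Proof. unfold mv_mul. rewrite neg_one, A3, A4. auto. Qed.
Lemma mul_zero x : mul x z = z.
Proof. unfold mv_mul. fold (mv_one ng z). rewrite A5, neg_one. auto. Qed.
Lemma mul_compl x : mul x (ng x) = z.
Proof. unfold mv_mul. rewrite A4, compl_l, neg_one. auto. Qed.
Lemma imp_mono_r x y w : le x y -> le (imp w x) (imp w y).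
Proof. apply add_mono_r. Qed.
Lemma imp_anti_l x y w : le x y -> le (imp y w) (imp x w).
Proof. intro H. apply add_mono, neg_anti, H. Qed.
Lemma modus a b : le (mul a (imp a b)) b.
Proof. rewrite mul_comm. apply resid. apply le_refl. Qed.
Lemma le_one_eq x : le one x -> x = one.
Proof. intro H. apply le_antisym; auto. apply le_top. Qed.
Lemma le_zero_eq x : le x z -> x = z.
Proof. intro H. apply le_antisym; auto. apply le_bot. Qed.
Lemma imp_one x y : le x y -> imp x y = one. Proof. auto. Qed.
Lemma one_imp y : imp one y = y. Proof. unfold mv_imp. rewrite neg_one, zero_l. auto. Qed.

Lemma join_comm x y : join x y = join y x. Proof. apply A6. Qed.
Lemma join_ub_r x y : le y (join x y).
Proof. unfold mv_join. rewrite A2. apply le_add. Qed.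
Lemma join_ub_l x y : le x (join x y).
Proof. rewrite join_comm. apply join_ub_r. Qed.
Lemma join_le_eq v y : le y v -> join v y = v.
Proof. intro H. unfold mv_join. rewrite A6. rewrite H, neg_one, zero_l. auto. Qed.
Lemma join_lub x y t : le x t -> le y t -> le (join x y) t.
Proof.
  intros Hx Hy. destruct (proj1 (le_exP y t) Hy) as [w Ht].
  unfold mv_le.
  assert (E : ng (join x y) = mul (ng y) (op (ng x) y)).
  { unfold mv_join, mv_mul. rewrite A4, A2. auto. }
  rewrite E, A2, Ht.
  rewrite (A2 y w), <- A1.
  assert (E2 : op y (mul (ng y) (op (ng x) y)) = join (op (ng x) y) y).
  { unfold mv_join, mv_mul. rewrite A4, A2. f_equal. f_equal. apply A2. }
  rewrite E2, join_le_eq by (rewrite A2; apply le_add).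
  rewrite A2, <- A1, <- Ht. apply Hx.
Qed.
Lemma join_mono x y x' y' : le x x' -> le y y' -> le (join x y) (join x' y').
Proof.
  intros; apply join_lub; eapply le_trans; eauto. apply join_ub_l. apply join_ub_r.
Qed.
Lemma meet_neg x y : meet x y = ng (join (ng x) (ng y)). Proof. reflexivity. Qed.
Lemma neg_join x y : ng (join x y) = meet (ng x) (ng y).
Proof. unfold mv_meet. rewrite !A4. auto. Qed.
Lemma meet_comm x y : meet x y = meet y x. Proof. unfold mv_meet. rewrite join_comm. auto. Qed.
Lemma meet_lb_l x y : le (meet x y) x.
Proof. apply neg_anti'. unfold mv_meet. rewrite A4. apply join_ub_l. Qed.
Lemma meet_lb_r x y : le (meet x y) y.
Proof. rewrite meet_comm. apply meet_lb_l. Qed.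
Lemma meet_glb x y t : le t x -> le t y -> le t (meet x y).
Proof.
  intros. apply neg_anti'. unfold mv_meet. rewrite A4. apply join_lub; apply neg_anti; auto.
Qed.
Lemma meet_mono x y x' y' : le x x' -> le y y' -> le (meet x y) (meet x' y').
Proof.
  intros; apply meet_glb; eapply le_trans; eauto. apply meet_lb_l. apply meet_lb_r.
Qed.
Lemma meet_le_eq x y : le x y -> meet x y = x.
Proof.
  intro H. apply le_antisym. apply meet_lb_l. apply meet_glb; auto. apply le_refl.
Qed.
Lemma meet_formula a b : meet a b = mul (op a (ng b)) b.
Proof. unfold mv_meet, mv_join, mv_mul. rewrite !A4. auto. Qed.
Lemma meet_formula' a b : meet a b = mul a (op (ng a) b).
Proof. rewrite meet_comm, meet_formula, mul_comm, A2. auto. Qed.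
Lemma mul_le_meet x y : le (mul x y) (meet x y).
Proof. apply meet_glb. apply mul_le. apply mul_le_r. Qed.

Lemma D1 x y w : le (mul x (join y w)) (join (mul x y) (mul x w)).
Proof.
  rewrite mul_comm. apply resid. apply join_lub; apply resid; rewrite mul_comm.
  apply join_ub_l. apply join_ub_r.
Qed.
Lemma D2 y w v : le (meet (join y w) v) (join (meet y v) (meet w v)).
Proof.
  rewrite (meet_formula' (join y w) v), mul_comm. eapply le_trans. apply D1. apply join_mono.
  - rewrite (meet_formula' y v), mul_comm. apply mul_mono_r. apply add_mono. apply neg_anti, join_ub_l.
  - rewrite (meet_formula' w v), mul_comm. apply mul_mono_r. apply add_mono. apply neg_anti, join_ub_r.
Qed.
Lemma D3i x y : mul (op x y) (ng x) = meet y (ng x).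
Proof. rewrite meet_formula, A4, A2. auto. Qed.
Lemma D3ii x w : op x (mul w (ng x)) = join w x.
Proof. unfold mv_join, mv_mul. rewrite !A4, A2. auto. Qed.
Lemma D3iii x w : op x w = op x (meet w (ng x)).
Proof.
  rewrite <- (D3i x w), D3ii. rewrite join_le_eq. auto. apply le_add.
Qed.
Lemma D4 x y w : le (op x (join y w)) (join (op x y) (op x w)).
Proof.
  set (m := join (op x y) (op x w)).
  rewrite D3iii. eapply le_trans. apply add_mono_r. apply D2.
  assert (Hx : le x m). { eapply le_trans. apply le_add. apply join_ub_l. }
  apply le_trans with (op x (mul m (ng x))).
  - apply add_mono_r. apply join_lub; rewrite <- D3i; apply mul_mono.
    apply join_ub_l. apply join_ub_r.
  - rewrite D3ii, join_le_eq by exact Hx. apply le_refl.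
Qed.
Lemma D5 x y w : le (meet (mul x y) (mul x w)) (mul x (meet y w)).
Proof.
  pose proof (D4 (ng x) (ng y) (ng w)) as H. apply neg_anti in H.
  rewrite neg_join in H.
  assert (E: ng (meet y w) = join (ng y) (ng w)) by (unfold mv_meet; apply A4).
  change (le (meet (mul x y) (mul x w)) (ng (op (ng x) (ng (meet y w))))).
  rewrite E. exact H.
Qed.
Lemma prelin0 x y : meet (mul x (ng y)) (mul y (ng x)) = z.
Proof.
  apply le_zero_eq.
  assert (E1 : mul x (ng y) = mul (join x y) (ng y)).
  { rewrite <- (D3ii y x), D3i, meet_le_eq. auto. apply mul_le_r. }
  assert (E2 : mul y (ng x) = mul (join x y) (ng x)).
  { rewrite join_comm, <- (D3ii x y), D3i, meet_le_eq. auto. apply mul_le_r. }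
  rewrite E1, E2. eapply le_trans. apply D5.
  rewrite <- neg_join, join_comm, mul_compl. apply le_refl.
Qed.
Lemma prelin x y : join (imp x y) (imp y x) = one.
Proof.
  assert (E : forall a b, imp a b = ng (mul a (ng b))).
  { intros; unfold mv_imp, mv_mul. rewrite !A4. auto. }
  rewrite !E. assert (E3 : join (ng (mul x (ng y))) (ng (mul y (ng x))) = ng (meet (mul x (ng y)) (mul y (ng x)))).
  { unfold mv_meet. rewrite A4. auto. }
  rewrite E3, prelin0. reflexivity.
Qed.

Fixpoint pw (x : A) (n : nat) : A := match n with O => one | S n => mul x (pw x n) end.
Lemma pw_add x n m : pw x (n + m) = mul (pw x n) (pw x m).
Proof.
  induction n; simpl. rewrite mul_comm, mul_one. auto. rewrite IHn, mul_assoc. auto.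
Qed.
Lemma pw_mono x y n : le x y -> le (pw x n) (pw y n).
Proof. intro H; induction n; simpl. apply le_refl. apply mul_mono2; auto. Qed.
Lemma pw_anti x n m : (n <= m)%nat -> le (pw x m) (pw x n).
Proof.
  induction 1. apply le_refl. eapply le_trans; [|apply IHle]. simpl. apply mul_le_r.
Qed.
Lemma join_pow a b i j : le (pw (join a b) (i + j)) (join (pw a i) (pw b j)).
Proof.
  revert j. induction i as [|i IHi]; intros j.
  - simpl. eapply le_trans. apply le_top. apply join_ub_l.
  - induction j as [|j IHj].
    + eapply le_trans; [|apply join_ub_r]. apply le_top.
    + replace (S i + S j)%nat with (S (i + S j)) by lia. simpl pw.
      assert (H1 := IHi (S j)).
      assert (H2 : le (pw (join a b) (i + S j)) (join (pw a (S i)) (pw b j))).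
      { replace (i + S j)%nat with (S i + j)%nat by lia. exact IHj. }
      eapply le_trans. apply mul_mono_r. apply meet_glb. exact H1. exact H2.
      rewrite mul_comm. eapply le_trans. apply D1. apply join_lub.
      * apply le_trans with (mul a (join (pw a i) (pw b (S j)))).
        { rewrite (mul_comm _ a). apply mul_mono_r. apply meet_lb_l. }
        eapply le_trans. apply D1. apply join_mono. apply le_refl. apply mul_le_r.
      * apply le_trans with (mul b (join (pw a (S i)) (pw b j))).
        { rewrite (mul_comm _ b). apply mul_mono_r. apply meet_lb_r. }
        eapply le_trans. apply D1. apply join_mono. apply mul_le_r. apply le_refl.
Qed.
Lemma mul4 p q r s : mul (mul p q) (mul r s) = mul (mul p r) (mul q s).
Proof.
  rewrite <- mul_assoc, (mul_assoc q r s), (mul_comm q r), <- mul_assoc, mul_assoc. auto.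
Qed.
Lemma mul_imp a b c d : le (mul (imp a b) (imp c d)) (imp (mul a c) (mul b d)).
Proof.
  apply (proj1 (resid _ _ _)). rewrite mul4, (mul_comm (imp a b) a), (mul_comm (imp c d) c).
  apply mul_mono2; apply modus.
Qed.
Lemma imp_pow a b n : le (pw (imp a b) n) (imp (pw a n) (pw b n)).
Proof.
  induction n; simpl. unfold mv_imp. rewrite neg_one, zero_l. apply le_refl.
  eapply le_trans. apply mul_mono_r. apply IHn. apply mul_imp.
Qed.
Lemma mul_add_le x y w : le (mul (op x y) w) (op x (mul y w)).
Proof.
  apply (proj2 (resid _ _ _)).
  assert (H: le y (op (ng w) (mul y w))).
  { rewrite A2. change (le y (join y (ng w))). apply join_ub_l. }
  unfold mv_imp. rewrite (A1 (ng w) x), (A2 (ng w) x), <- A1. apply add_mono_r, H.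
Qed.
Lemma imp_add a b c d : le (mul (imp a b) (imp c d)) (imp (op a c) (op b d)).
Proof.
  apply (proj1 (resid _ _ _)).
  apply le_trans with (mul (op a d) (imp a b)).
  { rewrite (mul_comm (imp a b) (imp c d)), (mul_comm (mul _ _) (op a c)), mul_assoc.
    apply mul_mono. eapply le_trans. apply mul_add_le. apply add_mono_r. apply modus. }
  rewrite (A2 a d). eapply le_trans. apply mul_add_le. rewrite (A2 b d). apply add_mono_r. apply modus.
Qed.
Lemma imp_trans x y w : le (mul (imp x y) (imp y w)) (imp x w).
Proof.
  apply (proj1 (resid _ _ _)). rewrite mul_comm, mul_assoc. eapply le_trans. apply mul_mono. apply modus. apply modus.
Qed.
Lemma le_imp x y : le x y <-> imp x y = one. Proof. tauto. Qed.
Lemma imp_le_one x y : imp x y = one -> le x y. Proof. auto. Qed.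
Lemma join_one_l x y : x = one -> join x y = one.
Proof. intros ->. apply le_one_eq. apply join_ub_l. Qed.
End MV.
Arguments A1 {A op ng z}.
Arguments A2 {A op ng z}.
Arguments A3 {A op ng z}.
Arguments A4 {A op ng z}.
Arguments A5 {A op ng z}.
Arguments A6 {A op ng z}.
Arguments neg_one {A op ng z}.
Arguments zero_l {A op ng z}.
Arguments one_l {A op ng z}.
Arguments compl_l {A op ng z}.
Arguments compl_r {A op ng z}.
Arguments le_refl {A op ng z}.
Arguments le_add {A op ng z}.
Arguments le_ex {A op ng z}.
Arguments le_exP {A op ng z}.
Arguments le_trans {A op ng z}.
Arguments le_antisym {A op ng z}.
Arguments le_top {A op ng z}.
Arguments le_bot {A op ng z}.
Arguments add_mono {A op ng z}.
Arguments add_mono_r {A op ng z}.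
Arguments add_mono2 {A op ng z}.
Arguments neg_anti {A op ng z}.
Arguments mul_comm {A op ng z}.
Arguments mul_assoc {A op ng z}.
Arguments resid {A op ng z}.
Arguments mul_mono {A op ng z}.
Arguments mul_mono_r {A op ng z}.
Arguments mul_mono2 {A op ng z}.
Arguments mul_le {A op ng z}.
Arguments mul_le_r {A op ng z}.
Arguments mul_one {A op ng z}.
Arguments mul_zero {A op ng z}.
Arguments mul_compl {A op ng z}.
Arguments imp_mono_r {A op ng z}.
Arguments imp_anti_l {A op ng z}.
Arguments modus {A op ng z}.
Arguments le_one_eq {A op ng z}.
Arguments le_zero_eq {A op ng z}.
Arguments imp_one {A op ng z}.
Arguments one_imp {A op ng z}.
Arguments join_comm {A op ng z}.
Arguments join_ub_r {A op ng z}.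
Arguments join_ub_l {A op ng z}.
Arguments join_le_eq {A op ng z}.
Arguments join_lub {A op ng z}.
Arguments join_mono {A op ng z}.
Arguments meet_neg {A op ng z}.
Arguments neg_join {A op ng z}.
Arguments meet_comm {A op ng z}.
Arguments meet_lb_l {A op ng z}.
Arguments meet_lb_r {A op ng z}.
Arguments meet_glb {A op ng z}.
Arguments meet_mono {A op ng z}.
Arguments meet_le_eq {A op ng z}.
Arguments meet_formula {A op ng z}.
Arguments mul_le_meet {A op ng z}.
Arguments D1 {A op ng z}.
Arguments D2 {A op ng z}.
Arguments D3i {A op ng z}.
Arguments D3ii {A op ng z}.
Arguments D3iii {A op ng z}.
Arguments D4 {A op ng z}.
Arguments D5 {A op ng z}.
Arguments prelin0 {A op ng z}.
Arguments prelin {A op ng z}.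
Arguments pw_add {A op ng z}.
Arguments pw_mono {A op ng z}.
Arguments pw_anti {A op ng z}.
Arguments join_pow {A op ng z}.
Arguments mul4 {A op ng z}.
Arguments mul_imp {A op ng z}.
Arguments imp_pow {A op ng z}.
Arguments mul_add_le {A op ng z}.
Arguments imp_add {A op ng z}.
Arguments imp_trans {A op ng z}.
Arguments le_imp {A op ng z}.
Arguments imp_le_one {A op ng z}.
Arguments join_one_l {A op ng z}.
Arguments pw {A} op ng z x n.
Arguments neg_anti' {A op ng z}.
Arguments meet_formula' {A op ng z}.

Open Scope R_scope.

Notation v x := (proj1_sig x).

Lemma vr (x : I01) : 0 <= v x <= 1. Proof. exact (proj2_sig x). Qed.
Lemma I01_eq (x y : I01) : v x = v y -> x = y.
Proof. destruct x as [x Hx], y as [y Hy]; simpl; intro E; subst. f_equal; apply proof_irrelevance. Qed.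

Ltac rmin := unfold Rmin, Rmax in *; repeat match goal with
  | |- context [Rle_dec ?a ?b] => destruct (Rle_dec a b)
  | H : context [Rle_dec ?a ?b] |- _ => destruct (Rle_dec a b) end; lra.

Lemma inf_exists {I : Type} (f : I -> I01) : exists m, is_inf01 f m.
Proof.
  set (E := fun r => r = 0 \/ exists i, r = 1 - v (f i)).
  assert (Hb : bound E). { exists 1. intros r [->|[i ->]]. lra. pose proof (vr (f i)); lra. }
  destruct (completeness E Hb) as [s [Hs1 Hs2]]. { exists 0; left; auto. }
  assert (s0 : 0 <= s). { apply Hs1; left; auto. }
  assert (s1 : s <= 1). { apply Hs2. intros r [->|[i ->]]. lra. pose proof (vr (f i)); lra. }
  assert (Hm : 0 <= 1 - s <= 1) by lra.
  exists (exist _ (1 - s) Hm). split; simpl.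
  - intro i. assert (1 - v (f i) <= s). { apply Hs1. right; eauto. } lra.
  - intros m' Hm'. assert (s <= 1 - v m'). { apply Hs2. intros r [->|[i ->]]. pose proof (vr m'); lra. pose proof (Hm' i); lra. } lra.
Qed.

Lemma Iinf_spec {I : Type} (f : I -> I01) : is_inf01 f (Iinf f).
Proof. unfold Iinf. apply epsilon_spec. apply inf_exists. Qed.
Lemma Iinf_lb {I : Type} (f : I -> I01) i : v (Iinf f) <= v (f i).
Proof. apply (proj1 (Iinf_spec f)). Qed.
Lemma Iinf_glb {I : Type} (f : I -> I01) (r : R) : r <= 1 -> (forall i, r <= v (f i)) -> r <= v (Iinf f).
Proof.
  intros H1 H2. destruct (Rle_lt_dec 0 r).
  - assert (Hm : 0 <= r <= 1) by lra. apply ((proj2 (Iinf_spec f)) (exist _ r Hm)). exact H2.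
  - pose proof (vr (Iinf f)); lra.
Qed.
Lemma Iinf_mono {I : Type} (f g : I -> I01) : (forall i, v (f i) <= v (g i)) -> v (Iinf f) <= v (Iinf g).
Proof.
  intro H. apply Iinf_glb. pose proof (vr (Iinf f)); lra. intro i. eapply Rle_trans. apply Iinf_lb. apply H.
Qed.

Lemma imp_val a b : v (i_imp a b) = Rmin (1 - v a + v b) 1. Proof. reflexivity. Qed.
Lemma oplus_val a b : v (i_oplus a b) = Rmin (v a + v b) 1. Proof. reflexivity. Qed.
Lemma neg_val a : v (i_neg a) = 1 - v a. Proof. reflexivity. Qed.
Section PartI.
Variable T : Type.
Local Notation pop := (pw_oplus T).
Local Notation png := (pw_neg T).
Local Notation pc := (pw_const T).

Lemma fext_I01 (x y : T -> I01) : (forall t, v (x t) = v (y t)) -> x = y.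
Proof. intro H. apply functional_extensionality. intro t. apply I01_eq, H. Qed.

Lemma pw_MV : is_MV pop png (pc q0).
Proof.
  unfold is_MV, pw_oplus, pw_neg, pw_const.
  repeat split; intros; apply fext_I01; intro t; simpl;
  repeat match goal with |- context [proj1_sig ?e] => generalize (vr e); generalize (proj1_sig e); intros end; rmin.
Qed.

Lemma pw_pavelka : is_pavelka pop png pc.
Proof.
  split; [apply pw_MV|split].
  - intros r s t E. apply fext_I01; intro u. simpl. exact E.
  - intros r s E. apply fext_I01; intro u. simpl. exact E.
Qed.

Lemma meet_val (x y : T -> I01) t : v (mv_meet pop png x y t) = Rmin (v (x t)) (v (y t)).
Proof.
  unfold mv_meet, mv_join, pw_oplus, pw_neg; simpl.
  pose proof (vr (x t)); pose proof (vr (y t)); rmin.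
Qed.

Lemma PT1 (S : T -> T -> I01) x y : f_S S (mv_meet pop png x y) = mv_meet pop png (f_S S x) (f_S S y).
Proof.
  apply fext_I01; intro t. rewrite meet_val. unfold f_S.
  apply Rle_antisym.
  - apply Rmin_glb; apply Iinf_mono; intro s; rewrite !imp_val, meet_val;
    pose proof (vr (x s)); pose proof (vr (y s)); pose proof (vr (S s t)); rmin.
  - apply Iinf_glb. pose proof (vr (Iinf (fun s => i_imp (S s t) (x s)))); rmin.
    intro s. rewrite imp_val, meet_val.
    pose proof (Iinf_lb (fun s => i_imp (S s t) (x s)) s).
    pose proof (Iinf_lb (fun s => i_imp (S s t) (y s)) s). cbv beta in *; rewrite !imp_val in H, H0.
    pose proof (vr (x s)); pose proof (vr (y s)); pose proof (vr (S s t)); rmin.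
Qed.

Lemma PT2 (S : T -> T -> I01) (r : rat01) x :
  mv_imp pop png (pc r) (f_S S x) = f_S S (mv_imp pop png (pc r) x).
Proof.
  apply fext_I01; intro t. unfold mv_imp, pw_oplus, pw_neg, pw_const, f_S; simpl.
  set (I := v (Iinf (fun s => i_imp (S s t) (x s)))).
  set (K := v (Iinf (fun s => i_imp (S s t) (i_oplus (i_neg (i_const r)) (x s))))).
  assert (HI : 0 <= I <= 1) by apply vr. assert (HK : 0 <= K <= 1) by apply vr.
  pose proof (proj2 (proj2_sig r)) as Hr.
  apply Rle_antisym.
  - apply Iinf_glb. rmin. intro s. simpl.
    pose proof (Iinf_lb (fun s => i_imp (S s t) (x s)) s). simpl in *. fold I in H.
    pose proof (vr (x s)); pose proof (vr (S s t)); rmin.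
  - destruct (Rle_dec 1 (1 - v r + I)). rmin.
    assert (K - 1 + v r <= I).
    { apply Iinf_glb. lra. intro s.
      pose proof (Iinf_lb (fun s => i_imp (S s t) (i_oplus (i_neg (i_const r)) (x s))) s).
      simpl in *. fold K in H. pose proof (vr (x s)); pose proof (vr (S s t)); rmin. }
    rmin.
Qed.

Lemma PT3gen (S S' : T -> T -> I01) (HS : forall s t, S' s t = S t s) x :
  mv_le pop png (pc q0) (png (f_S S' (png (f_S S x)))) x.
Proof.
  unfold mv_le, mv_one. apply fext_I01; intro t. unfold pw_oplus, pw_neg, pw_const, f_S; simpl.
  set (Hv := v (Iinf (fun s => i_imp (S' s t) (i_neg (Iinf (fun s0 => i_imp (S s0 s) (x s0))))))).
  assert (1 - v (x t) <= Hv).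
  { apply Iinf_glb. pose proof (vr (x t)); lra. intro s. simpl. rewrite HS.
    pose proof (Iinf_lb (fun s0 => i_imp (S s0 s) (x s0)) t). simpl in *.
    pose proof (vr (Iinf (fun s0 => i_imp (S s0 s) (x s0)))).
    pose proof (vr (x t)); pose proof (vr (S t s)); rmin. }
  pose proof (vr (x t)). assert (0 <= Hv <= 1) by apply vr. rmin.
Qed.

Lemma part_i (R : T -> T -> I01) :
  is_tense_pavelka pop png pc (f_S R) (f_S (Rinv_frame R)).
Proof.
  split. apply pw_pavelka.
  split. intros; apply PT1. split. intros; apply PT1.
  split. intros; apply PT2. split. intros; apply PT2.
  split; intro x; apply PT3gen; intros; reflexivity.
Qed.
End PartI.

Open Scope R_scope.

Lemma Q_dense (a b : R) : a < b -> exists q : Q, a < Q2R q < b.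
Proof.
  intro Hab. destruct (archimed_cor1 (b - a)) as [N [HN HN0]]. lra.
  destruct N as [|k]. lia.
  set (m := up (a * INR (S k))).
  exists (Qmake m (Pos.of_succ_nat k)).
  unfold Q2R; simpl. rewrite Znat.Zpos_P_of_succ_nat, <- Znat.Nat2Z.inj_succ, <- INR_IZR_INZ.
  destruct (archimed (a * INR (S k))) as [H1 H2]. fold m in H1, H2.
  assert (HN1 : 0 < INR (S k)) by (apply lt_0_INR; lia).
  split.
  - apply Rmult_lt_reg_r with (INR (S k)); auto. rewrite Rmult_assoc, Rinv_l by lra. lra.
  - apply Rmult_lt_reg_r with (INR (S k)); auto. rewrite Rmult_assoc, Rinv_l by lra.
    assert (1 < (b - a) * INR (S k)).
    { apply Rmult_lt_reg_r with (/ INR (S k)). apply Rinv_0_lt_compat; auto.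
      rewrite Rmult_assoc, Rinv_r, Rmult_1_l, Rmult_1_r by lra. lra. }
    lra.
Qed.

Definition isrq (x : R) := exists q : Q, Q2R q = x.
Lemma isrq_0 : isrq 0. Proof. exists 0%Q. apply Q2R_0. Qed.
Lemma isrq_1 : isrq 1. Proof. exists 1%Q. apply Q2R_1. Qed.
Lemma isrq_plus a b : isrq a -> isrq b -> isrq (a + b).
Proof. intros [p <-] [q <-]. exists (p + q)%Q. apply Q2R_plus. Qed.
Lemma isrq_minus a b : isrq a -> isrq b -> isrq (a - b).
Proof. intros [p <-] [q <-]. exists (p - q)%Q. apply Q2R_minus. Qed.
Lemma isrq_min a b : isrq a -> isrq b -> isrq (Rmin a b).
Proof. intros. unfold Rmin; destruct Rle_dec; auto. Qed.
Lemma isrq_max a b : isrq a -> isrq b -> isrq (Rmax a b).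
Proof. intros. unfold Rmax; destruct Rle_dec; auto. Qed.
Lemma rq (r : rat01) : isrq (v r). Proof. exact (proj1 (proj2_sig r)). Qed.
Lemma rr (r : rat01) : 0 <= v r <= 1. Proof. exact (proj2 (proj2_sig r)). Qed.
Lemma mk_rat x : isrq x -> 0 <= x <= 1 -> exists r : rat01, v r = x.
Proof. intros H1 H2. exists (exist _ x (conj H1 H2)). reflexivity. Qed.
Lemma rat_dense a b : 0 <= a -> a < b -> b <= 1 -> exists r : rat01, a < v r < b.
Proof.
  intros. destruct (Q_dense a b) as [q Hq]; auto.
  destruct (mk_rat (Q2R q)) as [r Hr]. exists q; auto. lra. exists r. lra.
Qed.
Lemma approx_below a eps : 0 <= a <= 1 -> 0 < eps -> exists r : rat01, a - eps < v r <= a.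
Proof.
  intros. destruct (Rle_lt_dec a 0) as [Ha0|Ha0].
  - exists q0. simpl. lra.
  - destruct (rat_dense (Rmax 0 (a - eps)) a) as [r Hr]. unfold Rmax; destruct Rle_dec; lra.
    unfold Rmax; destruct Rle_dec; lra. lra.
    exists r. unfold Rmax in Hr; destruct Rle_dec in Hr; lra.
Qed.
Lemma approx_above a eps : 0 <= a <= 1 -> 0 < eps -> exists r : rat01, a <= v r < a + eps.
Proof.
  intros. destruct (Rle_lt_dec 1 a) as [Ha1|Ha1].
  - destruct (mk_rat 1 isrq_1) as [r Hr]. lra. exists r. lra.
  - destruct (rat_dense a (Rmin 1 (a + eps))) as [r Hr]. lra.
    unfold Rmin; destruct Rle_dec; lra. unfold Rmin; destruct Rle_dec; lra.
    exists r. unfold Rmin in Hr; destruct Rle_dec in Hr; lra.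
Qed.

Section Pav.
Variables (A : Type) (op : A -> A -> A) (ng : A -> A) (c : rat01 -> A).
Hypothesis HP : is_pavelka op ng c.
Set Default Proof Using "All".
Let M : is_MV op ng (c q0) := proj1 HP.
Local Notation z := (c q0).
Local Notation one := (mv_one ng (c q0)).
Local Notation le := (mv_le op ng (c q0)).
Local Notation mul := (mv_mul op ng).
Local Notation imp := (mv_imp op ng).
Local Notation join := (mv_join op ng).
Local Notation meet := (mv_meet op ng).
Local Notation pw := (pw op ng (c q0)).

Lemma c_add (r s t : rat01) : Rmin (v r + v s) 1 = v t -> op (c r) (c s) = c t.
Proof. apply (proj1 (proj2 HP)). Qed.
Lemma c_neg (r s : rat01) : 1 - v r = v s -> ng (c r) = c s.
Proof. apply (proj2 (proj2 HP)). Qed.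
Lemma c_val (r s : rat01) : v r = v s -> c r = c s.
Proof.
  intro E. rewrite <- (A3 M (c r)). apply c_add. simpl. rewrite E.
  pose proof (rr s). unfold Rmin; destruct Rle_dec; lra.
Qed.
Lemma c_one (r : rat01) : v r = 1 -> c r = one.
Proof. intro E. unfold mv_one. symmetry. apply c_neg. simpl. lra. Qed.
Lemma c_zero (r : rat01) : v r = 0 -> c r = z.
Proof. intro E. apply c_val. simpl. auto. Qed.
Lemma ex_one : exists r : rat01, v r = 1.
Proof. apply mk_rat. apply isrq_1. lra. Qed.
Lemma c_negE (r : rat01) : exists s : rat01, v s = 1 - v r /\ ng (c r) = c s.
Proof.
  destruct (mk_rat (1 - v r)) as [s Hs]. apply isrq_minus. apply isrq_1. apply rq.
  pose proof (rr r); lra. exists s. split; auto. apply c_neg. auto.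
Qed.
Lemma c_addE (r s : rat01) : exists t : rat01, v t = Rmin (v r + v s) 1 /\ op (c r) (c s) = c t.
Proof.
  destruct (mk_rat (Rmin (v r + v s) 1)) as [t Ht]. apply isrq_min. apply isrq_plus; apply rq. apply isrq_1.
  pose proof (rr r); pose proof (rr s); unfold Rmin; destruct Rle_dec; lra.
  exists t. split; auto. apply c_add. auto.
Qed.
Lemma c_mulE (r s : rat01) : exists t : rat01, v t = Rmax 0 (v r + v s - 1) /\ mul (c r) (c s) = c t.
Proof.
  destruct (c_negE r) as [r' [Hr' Er]]. destruct (c_negE s) as [s' [Hs' Es]].
  destruct (c_addE r' s') as [u [Hu Eu]]. destruct (c_negE u) as [t [Ht Et]].
  exists t. split. rewrite Ht, Hu, Hr', Hs'. pose proof (rr r); pose proof (rr s). unfold Rmin, Rmax; repeat destruct Rle_dec; lra.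
  unfold mv_mul. rewrite Er, Es, Eu, Et. auto.
Qed.
Lemma c_impE (r s : rat01) : exists t : rat01, v t = Rmin (1 - v r + v s) 1 /\ imp (c r) (c s) = c t.
Proof.
  destruct (c_negE r) as [r' [Hr' Er]]. destruct (c_addE r' s) as [u [Hu Eu]].
  exists u. split. rewrite Hu, Hr'. auto. unfold mv_imp. rewrite Er. auto.
Qed.
Lemma c_le (r s : rat01) : v r <= v s -> le (c r) (c s).
Proof.
  intro H. destruct (c_impE r s) as [t [Ht E]]. unfold mv_le. change (imp (c r) (c s) = one).
  rewrite E. apply c_one. rewrite Ht. pose proof (rr s); unfold Rmin; destruct Rle_dec; lra.
Qed.

Section Filt.
Variable F : A -> Prop.
Hypothesis HF : is_filter op ng z F.
Lemma F_one : F one. Proof. apply HF. Qed.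
Lemma F_up x y : F x -> le x y -> F y. Proof. apply HF. Qed.
Lemma F_mul x y : F x -> F y -> F (mul x y). Proof. apply HF. Qed.
Lemma F_meet x y : F x -> F y -> F (meet x y).
Proof. intros. apply F_up with (mul x y). apply F_mul; auto. apply (mul_le_meet M). Qed.
Lemma F_mp a b : F a -> F (imp a b) -> F b.
Proof. intros. apply F_up with (mul a (imp a b)). apply F_mul; auto. apply (modus M). Qed.
Lemma F_trans x y w : F (imp x y) -> F (imp y w) -> F (imp x w).
Proof. intros. apply F_up with (mul (imp x y) (imp y w)). apply F_mul; auto. apply (imp_trans M). Qed.
Lemma F_pw x n : F x -> F (pw x n).
Proof. intro H. induction n; simpl. apply F_one. apply F_mul; auto. Qed.
Lemma F_zero_all : F z -> forall x, F x.
Proof. intros. apply F_up with z; auto. apply (le_bot M). Qed.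
Hypothesis Hprop : exists x, ~ F x.
Lemma F_nz : ~ F z.
Proof. intro H. destruct Hprop as [x Hx]. apply Hx, F_zero_all, H. Qed.
Lemma pw_c (q : rat01) n : exists s : rat01, c s = pw (c q) n /\ v s = Rmax 0 (1 - INR n * (1 - v q)).
Proof.
  induction n as [|n [s [Es Hs]]].
  - destruct ex_one as [r Hr]. exists r. split. apply c_one; auto. simpl. rewrite Hr. unfold Rmax; destruct Rle_dec; lra.
  - destruct (c_mulE q s) as [t [Ht Et]]. exists t. split. simpl. rewrite <- Es. auto.
    rewrite Ht, Hs, S_INR. pose proof (rr q). pose proof (pos_INR n).
    assert (0 <= INR n * (1 - v q)) by nra.
    unfold Rmax; repeat destruct Rle_dec; nra.
Qed.
Lemma const_in_F (t : rat01) : F (c t) -> v t = 1.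
Proof.
  intro H. pose proof (rr t). destruct (Rle_lt_dec 1 (v t)). lra. exfalso.
  destruct (INR_archimed (1 - v t) 1) as [n Hn]. lra.
  destruct (pw_c t n) as [s [Es Hs]].
  assert (F (c s)). rewrite Es. apply F_pw; auto.
  apply F_nz. rewrite (c_zero s) in H1; auto. rewrite Hs. unfold Rmax; destruct Rle_dec; lra.
Qed.
End Filt.

Lemma max_gen F a : maximal_filter op ng z F -> ~ F a -> exists f n, F f /\ mul f (pw a n) = z.
Proof.
  intros [[HF Hp] Hmax] Ha.
  set (G := fun x => exists f n, F f /\ le (mul f (pw a n)) x).
  assert (HG : is_filter op ng z G).
  { split; [|split].
    - exists one, O. split. apply F_one; auto. simpl. rewrite (mul_one M). apply (le_refl M).
    - intros x y [f [n [Hf Hl]]] Hxy. exists f, n. split; auto. eapply (le_trans M); eauto.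
    - intros x y [f [n [Hf Hl]]] [g [m [Hg Hm]]]. exists (mul f g), (n + m)%nat. split. apply F_mul; auto.
      rewrite (pw_add M), (mul4 M). apply (mul_mono2 M); auto. }
  destruct (classic (exists x, ~ G x)) as [Hpr|Hnp].
  - exfalso. apply Ha. apply (Hmax G (conj HG Hpr)).
    + intros x Hx. exists x, O. split; auto. simpl. rewrite (mul_one M). apply (le_refl M).
    + exists one, 1%nat. split. apply F_one; auto. simpl. rewrite (mul_one M), (mul_comm M), (mul_one M). apply (le_refl M).
  - assert (G z). { apply NNPP. intro. apply Hnp. eauto. }
    destruct H as [f [n [Hf Hl]]]. exists f, n. split; auto. apply (le_zero_eq M); auto.
Qed.

Lemma max_prime F a b : maximal_filter op ng z F -> F (join a b) -> F a \/ F b.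
Proof.
  intros HM Hj. destruct (classic (F a)) as [|Ha]; auto. destruct (classic (F b)) as [|Hb]; auto.
  exfalso. destruct (max_gen F a HM Ha) as [f [n [Hf Ef]]]. destruct (max_gen F b HM Hb) as [g [m [Hg Eg]]].
  destruct HM as [[HF Hp] _].
  set (e := mul f g). set (k := (n + m)%nat).
  assert (E1 : le (mul e (pw a k)) z).
  { apply (le_trans M) with (mul f (pw a n)). unfold e, k. apply (mul_mono2 M). apply (mul_le M). apply (pw_anti M). lia.
    rewrite Ef. apply (le_refl M). }
  assert (E2 : le (mul e (pw b k)) z).
  { apply (le_trans M) with (mul g (pw b m)). unfold e, k. apply (mul_mono2 M). apply (mul_le_r M). apply (pw_anti M). lia.
    rewrite Eg. apply (le_refl M). }
  apply (F_nz F HF Hp). apply F_up with (mul e (pw (join a b) (k + k))); auto.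
  apply F_mul. auto. unfold e; apply F_mul; auto. apply F_pw; auto.
  eapply (le_trans M). apply (mul_mono_r M). apply (join_pow M).
  eapply (le_trans M). apply (D1 M). apply (join_lub M); auto.
Qed.

Lemma max_lin F a b : maximal_filter op ng z F -> F (imp a b) \/ F (imp b a).
Proof.
  intro HM. apply max_prime; auto. rewrite (prelin M). apply F_one. apply HM.
Qed.
End Pav.
Arguments c_add {A op ng c}.
Arguments c_neg {A op ng c}.
Arguments c_val {A op ng c}.
Arguments c_one {A op ng c}.
Arguments c_zero {A op ng c}.
Arguments ex_one {A op ng c}.
Arguments c_negE {A op ng c}.
Arguments c_addE {A op ng c}.
Arguments c_mulE {A op ng c}.
Arguments c_impE {A op ng c}.
Arguments c_le {A op ng c}.
Arguments F_one {A op ng c}.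
Arguments F_up {A op ng c}.
Arguments F_mul {A op ng c}.
Arguments F_meet {A op ng c}.
Arguments F_mp {A op ng c}.
Arguments F_trans {A op ng c}.
Arguments F_pw {A op ng c}.
Arguments F_zero_all {A op ng c}.
Arguments F_nz {A op ng c}.
Arguments pw_c {A op ng c}.
Arguments const_in_F {A op ng c}.
Arguments max_gen {A op ng c}.
Arguments max_prime {A op ng c}.
Arguments max_lin {A op ng c}.

Open Scope R_scope.

Lemma eps_le a b : (forall eps, 0 < eps -> a < b + eps) -> a <= b.
Proof. intro H. apply Rnot_lt_le. intro. specialize (H ((a - b)/2)). lra. Qed.

Section Quot.
Variables (A : Type) (op : A -> A -> A) (ng : A -> A) (c : rat01 -> A).
Hypothesis HP : is_pavelka op ng c.
Set Default Proof Using "All".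
Let M : is_MV op ng (c q0) := proj1 HP.
Local Notation z := (c q0).
Local Notation one := (mv_one ng (c q0)).
Local Notation le := (mv_le op ng (c q0)).
Local Notation mul := (mv_mul op ng).
Local Notation imp := (mv_imp op ng).
Local Notation pw := (pw op ng (c q0)).
Variable F : A -> Prop.
Hypothesis HM : maximal_filter op ng z F.
Let HF : is_filter op ng z F := proj1 (proj1 HM).
Let Hp : exists x, ~ F x := proj2 (proj1 HM).

Definition Lq x (q : rat01) := F (imp (c q) x).
Definition Uq x (q : rat01) := F (imp x (c q)).
Definition EL x := fun r => exists q, Lq x q /\ r = v q.

Lemma L0 x : Lq x q0.
Proof. unfold Lq, mv_imp. change (F (op one x)). rewrite (one_l M). apply (F_one HP F HF). Qed.
Lemma U1 x (q : rat01) : v q = 1 -> Uq x q.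
Proof. intro E. unfold Uq. rewrite (c_one HP q E). unfold mv_imp. rewrite (A5 M). apply (F_one HP F HF). Qed.
Lemma LU x p q : Lq x p -> Uq x q -> v p <= v q.
Proof.
  intros H1 H2. pose proof (F_trans HP F HF _ _ _ H1 H2) as H.
  destruct (c_impE HP p q) as [t [Ht Et]]. rewrite Et in H.
  apply (const_in_F HP F HF Hp) in H. rewrite Ht in H. pose proof (rr p); pose proof (rr q).
  unfold Rmin in H; destruct Rle_dec in H; lra.
Qed.
Lemma lin x q : Lq x q \/ Uq x q.
Proof. unfold Lq, Uq. apply (max_lin HP); auto. Qed.
Lemma EL_bound x : bound (EL x).
Proof. exists 1. intros r [q [_ ->]]. apply rr. Qed.
Lemma EL_ne x : exists r, EL x r.
Proof. exists 0. exists q0. split. apply L0. reflexivity. Qed.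
Definition hv x : R := proj1_sig (completeness (EL x) (EL_bound x) (EL_ne x)).
Lemma hv_lub x : is_lub (EL x) (hv x).
Proof. unfold hv. destruct completeness; auto. Qed.
Lemma hv_ge x q : Lq x q -> v q <= hv x.
Proof. intro H. apply (proj1 (hv_lub x)). exists q; auto. Qed.
Lemma hv_ub x b : (forall q, Lq x q -> v q <= b) -> hv x <= b.
Proof. intro H. apply (proj2 (hv_lub x)). intros r [q [Hq ->]]. auto. Qed.
Lemma hv_le x q : Uq x q -> hv x <= v q.
Proof. intro H. apply hv_ub. intros p Hq. eapply LU; eauto. Qed.
Lemma hv_range x : 0 <= hv x <= 1.
Proof.
  split. apply (hv_ge x q0 (L0 x)). destruct (ex_one HP) as [q Hq]. rewrite <- Hq. apply hv_le, U1, Hq.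
Qed.
Lemma L_of_lt x q : v q < hv x -> Lq x q.
Proof. intro H. destruct (lin x q); auto. apply hv_le in H0. lra. Qed.
Lemma U_of_gt x q : hv x < v q -> Uq x q.
Proof. intro H. destruct (lin x q); auto. apply hv_ge in H0. lra. Qed.
Lemma L_approx x eps : 0 < eps -> exists q, Lq x q /\ hv x - eps < v q.
Proof.
  intro He. apply NNPP; intro Hn.
  assert (hv x <= hv x - eps).
  { apply hv_ub. intros q Hq. apply Rnot_lt_le. intro. apply Hn; eauto. }
  lra.
Qed.
Lemma U_approx x eps : 0 < eps -> exists q, Uq x q /\ v q < hv x + eps.
Proof.
  intro He. pose proof (hv_range x). destruct (Rlt_le_dec (hv x) 1).
  - destruct (rat_dense (hv x) (Rmin 1 (hv x + eps))) as [q Hq]. lra.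
    unfold Rmin; destruct Rle_dec; lra. unfold Rmin; destruct Rle_dec; lra.
    exists q. split. apply U_of_gt; lra. unfold Rmin in Hq; destruct Rle_dec in Hq; lra.
  - destruct (ex_one HP) as [q Hq]. exists q. split. apply U1; auto. lra.
Qed.
Lemma Lq_val x q q' : v q = v q' -> Lq x q -> Lq x q'.
Proof. unfold Lq. intro E. rewrite (c_val HP q q' E). auto. Qed.
Lemma Uq_val x q q' : v q = v q' -> Uq x q -> Uq x q'.
Proof. unfold Uq. intro E. rewrite (c_val HP q q' E). auto. Qed.


Lemma hv_c r : hv (c r) = v r.
Proof.
  assert (F (imp (c r) (c r))). { unfold mv_imp; rewrite (compl_l M). apply (F_one HP F HF). }
  apply Rle_antisym. apply hv_le. exact H. apply hv_ge. exact H.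
Qed.

Lemma LnegU x q q' : v q' = 1 - v q -> (Lq (ng x) q <-> Uq x q').
Proof.
  intro E. unfold Lq, Uq, mv_imp. rewrite (c_neg HP q q'), (A2 M) by lra. tauto.
Qed.

Lemma hv_neg x : hv (ng x) = 1 - hv x.
Proof.
  apply Rle_antisym.
  - apply hv_ub. intros q Hq. destruct (c_negE HP q) as [q' [Hq' _]].
    apply (LnegU x q q' Hq') in Hq. apply hv_le in Hq. lra.
  - apply eps_le. intros eps He. destruct (U_approx x eps He) as [q [Hq Hlt]].
    destruct (c_negE HP q) as [q' [Hq' _]].
    assert (Lq (ng x) q'). { apply (LnegU x q' q). lra. auto. }
    apply hv_ge in H. lra.
Qed.

Lemma hv_add x y : hv (op x y) = Rmin (hv x + hv y) 1.
Proof.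
  apply Rle_antisym.
  - apply eps_le. intros eps He.
    destruct (U_approx x (eps/2)) as [p [Hp1 Hp2]]. lra.
    destruct (U_approx y (eps/2)) as [q [Hq1 Hq2]]. lra.
    destruct (c_addE HP p q) as [t [Ht Et]].
    assert (Uq (op x y) t).
    { unfold Uq. rewrite <- Et. eapply (F_up HP F HF). apply (F_mul HP F HF). exact Hp1. exact Hq1. apply (imp_add M). }
    apply hv_le in H. pose proof (hv_range x); pose proof (hv_range y). rewrite Ht in H.
    unfold Rmin in *; repeat destruct Rle_dec; lra.
  - apply eps_le. intros eps He.
    destruct (L_approx x (eps/2)) as [p [Hp1 Hp2]]. lra.
    destruct (L_approx y (eps/2)) as [q [Hq1 Hq2]]. lra.
    destruct (c_addE HP p q) as [t [Ht Et]].
    assert (Lq (op x y) t).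
    { unfold Lq. rewrite <- Et. eapply (F_up HP F HF). apply (F_mul HP F HF). exact Hp1. exact Hq1. apply (imp_add M). }
    apply hv_ge in H. pose proof (hv_range x); pose proof (hv_range y). rewrite Ht in H.
    unfold Rmin in *; repeat destruct Rle_dec; lra.
Qed.

Lemma hv_kernel x : hv x = 1 <-> F x.
Proof.
  split.
  - intro H1. apply NNPP; intro Hx.
    destruct (max_gen HP F x HM Hx) as [f [n [Hf Ef]]].
    destruct (rat_dense (Rmax 0 (1 - 1 / (INR n + 1))) 1) as [q [Hq1 Hq2]].
    unfold Rmax; destruct Rle_dec; lra.
    { pose proof (pos_INR n). assert (0 < 1 / (INR n + 1)) by (apply Rdiv_lt_0_compat; lra).
      unfold Rmax; destruct Rle_dec; lra. }
    lra.
    assert (HL : Lq x q) by (apply L_of_lt; lra).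
    destruct (pw_c HP F HF Hp q n) as [s [Es Hs]].
    assert (Hs0 : 0 < v s).
    { rewrite Hs. pose proof (pos_INR n).
      assert (INR n * (1 - v q) < 1).
      { assert (1 - v q < 1 / (INR n + 1)). { unfold Rmax in Hq1; destruct Rle_dec in Hq1; lra. }
        apply Rle_lt_trans with (INR n * (1 / (INR n + 1))). apply Rmult_le_compat_l; lra.
        unfold Rdiv. rewrite Rmult_1_l. apply Rmult_lt_reg_r with (INR n + 1). lra.
        rewrite Rmult_assoc, Rinv_l by lra. lra. }
      unfold Rmax; destruct Rle_dec; lra. }
    assert (H2 : F (imp (c s) (pw x n))).
    { rewrite Es. eapply (F_up HP F HF). apply (F_pw HP F HF). exact HL. apply (imp_pow M). }
    assert (H3 : F (ng (c s))).
    { eapply (F_up HP F HF). apply (F_mul HP F HF). exact Hf. exact H2.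
      replace (ng (c s)) with (imp (c s) z) by (unfold mv_imp; apply (A3 M)).
      apply (proj1 (resid M _ _ _)).
      apply (le_trans M) with (mul f (pw x n)).
      rewrite <- (mul_assoc M). apply (mul_mono_r M). rewrite (mul_comm M). apply (modus M).
      rewrite Ef. apply (le_refl M). }
    destruct (c_negE HP s) as [s' [Hs' Es']]. rewrite Es' in H3.
    apply (const_in_F HP F HF Hp) in H3. lra.
  - intro H. destruct (ex_one HP) as [q Hq]. apply Rle_antisym. apply hv_range.
    rewrite <- Hq. apply hv_ge. unfold Lq. rewrite (c_one HP q Hq). unfold mv_imp.
    rewrite (neg_one M), (zero_l M). auto.
Qed.

Definition hq (x : A) : I01 := exist _ (hv x) (hv_range x).
Lemma hq_quot : quot_hom op ng c F hq.
Proof.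
  split; [split; [|split]|].
  - intros x y. apply I01_eq. simpl. apply hv_add.
  - intros x. apply I01_eq. simpl. apply hv_neg.
  - intros r. apply I01_eq. simpl. apply hv_c.
  - intro x. simpl. apply hv_kernel.
Qed.
End Quot.

Lemma quot_spec {A} (op : A -> A -> A) ng c F :
  is_pavelka op ng c -> maximal_filter op ng (c q0) F -> quot_hom op ng c F (quot op ng c F).
Proof.
  intros HP HM. unfold quot. apply epsilon_spec. exists (hq A op ng c HP F HM). apply hq_quot.
Qed.

Open Scope R_scope.

Lemma kernel_max {A B : Type} (op : A -> A -> A) ng z (bop : B -> B -> B) bng bz (h : A -> B) :
  is_MV op ng z -> simple_MV bop bng bz -> MV_hom op ng z bop bng bz h ->
  maximal_filter op ng z (fun a => h a = mv_one bng bz).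
Proof.
  intros MA [MB [Hnt Hsimp]] [Hop [Hng Hz]].
  assert (Hone : h (mv_one ng z) = mv_one bng bz). { unfold mv_one. rewrite Hng, Hz. auto. }
  assert (Hmul : forall x y, h (mv_mul op ng x y) = mv_mul bop bng (h x) (h y)).
  { intros. unfold mv_mul. rewrite Hng, Hop, !Hng. auto. }
  assert (Hle : forall x y, mv_le op ng z x y -> mv_le bop bng bz (h x) (h y)).
  { intros x y H. unfold mv_le in *. rewrite <- Hng, <- Hop, H. auto. }
  assert (HK : is_filter op ng z (fun a => h a = mv_one bng bz)).
  { split; [|split]; auto.
    - intros x y Hx Hxy. apply Hle in Hxy. rewrite Hx in Hxy. apply (le_one_eq MB); auto.
    - intros x y Hx Hy. rewrite Hmul, Hx, Hy. apply (mul_one MB). }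
  split. split; auto. exists z. rewrite Hz. auto.
  intros G [HG [w Hw]] HKG x Gx.
  set (G' := fun b => exists g, G g /\ mv_le bop bng bz (h g) b).
  assert (HG' : is_filter bop bng bz G').
  { split; [|split].
    - exists (mv_one ng z). split. apply HG. rewrite Hone. apply (le_refl MB).
    - intros a b [g [Gg Hg]] Hab. exists g. split; auto. eapply (le_trans MB); eauto.
    - intros a b [g [Gg Hg]] [g' [Gg' Hg']]. exists (mv_mul op ng g g'). split. apply HG; auto.
      rewrite Hmul. apply (mul_mono2 MB); auto. }
  destruct (Hsimp G' HG') as [H1|H2].
  - apply H1. exists x. split; auto. apply (le_refl MB).
  - exfalso. destruct (H2 bz) as [g [Gg Hg]]. apply (le_zero_eq MB) in Hg.
    assert (G (ng g)). { apply HKG. rewrite Hng, Hg. auto. }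
    assert (G z). { rewrite <- (mul_compl MA g). apply HG; auto. }
    apply Hw. apply (proj1 (proj2 HG)) with z; auto. apply (le_bot MA).
Qed.

Section Homs.
Variables (A : Type) (op : A -> A -> A) (ng : A -> A) (c : rat01 -> A).
Hypothesis HP : is_pavelka op ng c.
Set Default Proof Using "All".
Let M : is_MV op ng (c q0) := proj1 HP.
Local Notation z := (c q0).
Local Notation one := (mv_one ng (c q0)).
Local Notation le := (mv_le op ng (c q0)).
Local Notation mul := (mv_mul op ng).
Local Notation imp := (mv_imp op ng).
Local Notation pw := (pw op ng (c q0)).
Variable h : A -> I01.
Hypothesis Hh : pavelka_hom op ng c i_oplus i_neg i_const h.

Lemma h_op x y : v (h (op x y)) = Rmin (v (h x) + v (h y)) 1.
Proof. rewrite (proj1 Hh). reflexivity. Qed.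
Lemma h_ng x : v (h (ng x)) = 1 - v (h x).
Proof. rewrite (proj1 (proj2 Hh)). reflexivity. Qed.
Lemma h_c r : v (h (c r)) = v r.
Proof. rewrite (proj2 (proj2 Hh)). reflexivity. Qed.
Lemma h_z : v (h z) = 0. Proof. rewrite h_c. reflexivity. Qed.
Lemma h_one : v (h one) = 1. Proof. unfold mv_one. rewrite h_ng, h_z. lra. Qed.
Lemma h_imp x y : v (h (imp x y)) = Rmin (1 - v (h x) + v (h y)) 1.
Proof. unfold mv_imp. rewrite h_op, h_ng. auto. Qed.
Lemma h_mul x y : v (h (mul x y)) = Rmax 0 (v (h x) + v (h y) - 1).
Proof.
  unfold mv_mul. rewrite h_ng, h_op, !h_ng. pose proof (vr (h x)); pose proof (vr (h y)).
  unfold Rmin, Rmax; repeat destruct Rle_dec; lra.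
Qed.
Lemma h_mono x y : le x y -> v (h x) <= v (h y).
Proof.
  intro H. pose proof (h_imp x y) as E. unfold mv_imp in E. unfold mv_le in H. rewrite H, h_one in E.
  unfold Rmin in E; destruct Rle_dec in E; lra.
Qed.
Lemma h_pw1 x n : v (h x) = 1 -> v (h (pw x n)) = 1.
Proof.
  intro H. induction n; simpl. apply h_one. rewrite h_mul, H, IHn. unfold Rmax; destruct Rle_dec; lra.
Qed.
End Homs.
Arguments h_op {A op ng c} HP {h} Hh.
Arguments h_ng {A op ng c} HP {h} Hh.
Arguments h_c {A op ng c} HP {h} Hh.
Arguments h_z {A op ng c} HP {h} Hh.
Arguments h_one {A op ng c} HP {h} Hh.
Arguments h_imp {A op ng c} HP {h} Hh.
Arguments h_mul {A op ng c} HP {h} Hh.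
Arguments h_mono {A op ng c} HP {h} Hh.
Arguments h_pw1 {A op ng c} HP {h} Hh.

Section Sep.
Variables (A : Type) (op : A -> A -> A) (ng : A -> A) (c : rat01 -> A).
Hypothesis HP : is_pavelka op ng c.
Hypothesis HS : semisimple op ng (c q0).
Set Default Proof Using "All".
Let M : is_MV op ng (c q0) := proj1 HP.
Local Notation z := (c q0).
Local Notation one := (mv_one ng (c q0)).
Local Notation le := (mv_le op ng (c q0)).
Local Notation imp := (mv_imp op ng).

Lemma qh F : maximal_filter op ng z F -> pavelka_hom op ng c i_oplus i_neg i_const (quot op ng c F).
Proof. intro HM. apply (quot_spec op ng c F HP HM). Qed.
Lemma qk F x : maximal_filter op ng z F -> (v (quot op ng c F x) = 1 <-> F x).
Proof. intro HM. apply (quot_spec op ng c F HP HM). Qed.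

Lemma sep_le x y : (forall F, maximal_filter op ng z F -> v (quot op ng c F x) <= v (quot op ng c F y)) -> le x y.
Proof.
  intro H. destruct HS as [I [B [bop [bng [bz [hs [Hsimp [Hhom [_ Hinj]]]]]]]]].
  unfold mv_le. change (imp x y = one). apply Hinj. intro i.
  pose proof (kernel_max op ng z (bop i) (bng i) (bz i) (hs i) M (Hsimp i) (Hhom i)) as HK.
  set (K := fun a => hs i a = mv_one (bng i) (bz i)) in HK.
  assert (K (imp x y)).
  { apply (proj1 (qk K _ HK)). rewrite (h_imp HP (qh K HK)). specialize (H K HK).
    pose proof (vr (quot op ng c K x)). unfold Rmin; destruct Rle_dec; lra. }
  unfold K in H0. rewrite H0. destruct (Hhom i) as [_ [Hng Hz]]. unfold mv_one. rewrite Hng, Hz. auto.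
Qed.
Lemma sep_eq x y : (forall F, maximal_filter op ng z F -> v (quot op ng c F x) = v (quot op ng c F y)) -> x = y.
Proof.
  intro H. apply (le_antisym M); apply sep_le; intros F HF; rewrite (H F HF); lra.
Qed.

End Sep.

Lemma ext_max {A} (op : A -> A -> A) ng z (F0 : A -> Prop) :
  is_MV op ng z -> is_filter op ng z F0 -> ~ F0 z ->
  exists Mx, maximal_filter op ng z Mx /\ forall x, F0 x -> Mx x.
Proof.
  intros MA HF0 Hz0.
  set (P := fun X : A -> Prop => (forall x, ~ X x) \/ (is_filter op ng z X /\ ~ X z /\ forall x, F0 x -> X x)).
  destruct (@classical_sets.Zorn_bigcup A P) as [Am [PA Amax]].
  - intros Fc HFc Htot. unfold P.
    destruct (classic (exists X a, Fc X /\ X a)) as [[X0 [a0 [FX0 Xa0]]]|Hne].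
    + right.
      assert (Hfil : forall X a, Fc X -> X a -> is_filter op ng z X /\ ~ X z /\ forall x, F0 x -> X x).
      { intros X a FX Xa. destruct (HFc X FX) as [He|Hr]; auto. exfalso; eapply He; eauto. }
      destruct (Hfil X0 a0 FX0 Xa0) as [HX0 [Hz X0F]].
      unfold classical_sets.bigcup, classical_sets.mkset. simpl.
      split; [split; [|split]|split].
      * exists X0; auto. apply HX0.
      * intros x1 y1 Hx1 Hxy. destruct Hx1 as [X FX Xx]. exists X; auto.
        apply (proj1 (proj2 (proj1 (Hfil X x1 FX Xx)))) with x1; auto.
      * intros x1 y1 Hx1 Hy1. destruct Hx1 as [X FX Xx]. destruct Hy1 as [Y FY Yy]. destruct (Htot X Y FX FY) as [XY|YX].
        -- exists Y; auto. apply (proj2 (proj2 (proj1 (Hfil Y y1 FY Yy)))); auto.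
        -- exists X; auto. apply (proj2 (proj2 (proj1 (Hfil X x1 FX Xx)))); auto.
      * intros [X FX Xz]. apply (Hfil X z FX Xz); auto.
      * intros x Hx. exists X0; auto.
    + left. intros x [X FX Xx]. apply Hne. eauto.
  - destruct PA as [Hem|[HA [HAz HAF]]].
    + exfalso. apply (Amax F0). split. intros x Hx. exfalso; eapply Hem; eauto.
      intro Hs. apply (Hem (mv_one ng z)). apply Hs. apply HF0.
      right. auto.
    + exists Am. split; auto. split. split; auto. exists z; auto.
      intros G [HG [w Hw]] HAG x Gx. apply NNPP; intro Hx.
      apply (Amax G). split. intros t Ht; auto. intro Hs. apply Hx, Hs, Gx.
      right. split; auto. split. intro Gz. apply Hw. apply (proj1 (proj2 HG)) with z; auto. apply (le_bot MA).
      intros t Ht; auto.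
Qed.

Open Scope R_scope.

Lemma Iinf_le_ex {I J : Type} (f : I -> I01) (g : J -> I01) :
  (forall j, exists i, v (f i) <= v (g j)) -> v (Iinf f) <= v (Iinf g).
Proof.
  intro H. apply Iinf_glb. pose proof (vr (Iinf f)); lra.
  intro j. destruct (H j) as [i Hi]. eapply Rle_trans. apply Iinf_lb. exact Hi.
Qed.

Lemma tense_swap {A} (op : A -> A -> A) ng c G H :
  is_tense_pavelka op ng c G H -> is_tense_pavelka op ng c H G.
Proof. intros [a [b [b' [d [d' [e e']]]]]]. exact (conj a (conj b' (conj b (conj d' (conj d (conj e' e)))))). Qed.

Section Tense.
Variables (A : Type) (op : A -> A -> A) (ng : A -> A) (c : rat01 -> A) (G H : A -> A).
Hypothesis HT : is_tense_pavelka op ng c G H.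
Hypothesis HS : semisimple op ng (c q0).
Set Default Proof Using "All".
Let HP : is_pavelka op ng c := proj1 HT.
Let M : is_MV op ng (c q0) := proj1 HP.
Local Notation z := (c q0).
Local Notation one := (mv_one ng (c q0)).
Local Notation le := (mv_le op ng (c q0)).
Local Notation mul := (mv_mul op ng).
Local Notation imp := (mv_imp op ng).
Local Notation meet := (mv_meet op ng).
Local Notation pw := (pw op ng (c q0)).
Local Notation q F := (quot op ng c F).

Let PT1G : forall x y, G (meet x y) = meet (G x) (G y) := proj1 (proj2 HT).
Let PT1H : forall x y, H (meet x y) = meet (H x) (H y) := proj1 (proj2 (proj2 HT)).
Let PT2G : forall (r : rat01) x, imp (c r) (G x) = G (imp (c r) x) := proj1 (proj2 (proj2 (proj2 HT))).
Let PT3a : forall x, le (ng (H (ng (G x)))) x := proj1 (proj2 (proj2 (proj2 (proj2 (proj2 HT))))).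
Let PT3b : forall x, le (ng (G (ng (H x)))) x := proj2 (proj2 (proj2 (proj2 (proj2 (proj2 HT))))).

Lemma G_mono x y : le x y -> le (G x) (G y).
Proof. intro Hxy. rewrite <- (meet_le_eq M x y Hxy), PT1G. apply (meet_lb_r M). Qed.
Lemma H_mono x y : le x y -> le (H x) (H y).
Proof. intro Hxy. rewrite <- (meet_le_eq M x y Hxy), PT1H. apply (meet_lb_r M). Qed.
Definition Pp x := ng (H (ng x)).
Lemma P_mono x y : le x y -> le (Pp x) (Pp y).
Proof. intro Hxy. unfold Pp. apply (neg_anti M), H_mono, (neg_anti M), Hxy. Qed.
Lemma PG a : le (Pp (G a)) a. Proof. apply PT3a. Qed.
Lemma GP w : le w (G (Pp w)).
Proof. apply (neg_anti' M). apply PT3b. Qed.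

Lemma KEY (F : A -> Prop) y : maximal_filter op ng z F -> v (q F (G y)) < 1 ->
  exists Mx dl, maximal_filter op ng z Mx /\ 0 < dl /\
    forall a, v (q Mx y) + dl <= v (i_imp (q F (G a)) (q Mx a)).
Proof.
  intros HF Hy. set (phi := v (q F (G y))).
  assert (Hphi : 0 <= phi <= 1) by apply vr.
  assert (Hy' : 0 < 1 - phi) by (unfold phi; lra).
  destruct (rat_dense 0 (1 - phi)) as [d [Hd1 Hd2]]; try lra.
  destruct (c_negE HP d) as [e [He _]].
  set (t := fun w => imp (c d) (mul (Pp w) (ng y))).
  assert (t_mono : forall w w', le w w' -> le (t w) (t w')).
  { intros. apply (imp_mono_r M). apply (mul_mono M). apply P_mono; auto. }
  set (N := fun x => exists w n, F w /\ le (pw (t w) n) x).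
  assert (HFf : is_filter op ng z F) by apply HF.
  assert (HN : is_filter op ng z N).
  { split; [|split].
    - exists one, O. split. apply (F_one HP F HFf). apply (le_refl M).
    - intros x1 y1 [w [n [Hw Hl]]] Hxy. exists w, n. split; auto. eapply (le_trans M); eauto.
    - intros x1 y1 [w [n [Hw Hl]]] [w' [m [Hw' Hl']]]. exists (meet w w'), (n + m)%nat.
      split. apply (F_meet HP F HFf); auto. rewrite (pw_add M). apply (mul_mono2 M).
      + eapply (le_trans M); [|exact Hl]. apply (pw_mono M). apply t_mono, (meet_lb_l M).
      + eapply (le_trans M); [|exact Hl']. apply (pw_mono M). apply t_mono, (meet_lb_r M). }
  assert (HNz : ~ N z).
  { intros [w [n [Hw Hl]]].
    assert (Hle : le (mul (Pp w) (c e)) y).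
    { apply (sep_le A op ng c HP HS). intros F' HF'.
      pose proof (qh A op ng c HP HS F' HF') as Hh.
      assert (Ht : v (q F' (t w)) <> 1).
      { intro E. apply (h_pw1 HP Hh _ n) in E. pose proof (h_mono HP Hh _ _ Hl). rewrite (h_z HP Hh) in H0. lra. }
      unfold t in Ht. rewrite (h_imp HP Hh), (h_c HP Hh), (h_mul HP Hh), (h_ng HP Hh) in Ht.
      rewrite (h_mul HP Hh), (h_c HP Hh), He.
      pose proof (vr (q F' (Pp w))); pose proof (vr (q F' y)).
      unfold Rmin, Rmax in *; repeat destruct Rle_dec; lra. }
    apply (proj1 (resid M _ _ _)) in Hle.
    assert (Hw2 : le w (imp (c e) (G y))).
    { rewrite PT2G. eapply (le_trans M). apply GP. apply G_mono. exact Hle. }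
    pose proof (qh A op ng c HP HS F HF) as Hh.
    apply (h_mono HP Hh) in Hw2. rewrite (h_imp HP Hh), (h_c HP Hh), He in Hw2.
    rewrite (proj2 (qk A op ng c HP HS F w HF) Hw) in Hw2. fold phi in Hw2.
    unfold Rmin in Hw2; destruct Rle_dec in Hw2; lra. }
  destruct (ext_max op ng z N M HN HNz) as [Mx [HMx HNM]].
  exists Mx, (v d). split; auto. split; auto.
  pose proof (qh A op ng c HP HS Mx HMx) as Hm.
  assert (Hbig : forall w, F w -> v (q Mx y) + v d <= v (q Mx (Pp w))).
  { intros w Hw. assert (Mx (t w)). { apply HNM. exists w, 1%nat. split; auto. simpl. rewrite (mul_one M). apply (le_refl M). }
    apply (qk A op ng c HP HS Mx _ HMx) in H0. unfold t in H0.
    rewrite (h_imp HP Hm), (h_c HP Hm), (h_mul HP Hm), (h_ng HP Hm) in H0.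
    pose proof (vr (q Mx (Pp w))); pose proof (vr (q Mx y)).
    unfold Rmin, Rmax in *; repeat destruct Rle_dec; lra. }
  assert (H1 : v (q Mx y) + v d <= 1).
  { eapply Rle_trans. apply (Hbig one). apply (F_one HP F HFf). apply vr. }
  intro a. rewrite imp_val. apply Rmin_glb; auto.
  pose proof (qh A op ng c HP HS F HF) as Hh.
  apply eps_le. intros eps Heps.
  destruct (approx_below (v (q F (G a))) eps) as [p [Hp1 Hp2]]. apply vr. auto.
  assert (Fw : F (imp (c p) (G a))).
  { apply (qk A op ng c HP HS F _ HF). rewrite (h_imp HP Hh), (h_c HP Hh).
    pose proof (vr (q F (G a))). unfold Rmin; destruct Rle_dec; lra. }
  pose proof (Hbig _ Fw) as Hb.
  assert (le (Pp (imp (c p) (G a))) (imp (c p) a)). { rewrite PT2G. apply PG. }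
  apply (h_mono HP Hm) in H0. rewrite (h_imp HP Hm), (h_c HP Hm) in H0.
  unfold Rmin in H0; destruct Rle_dec in H0; lra.
Qed.

Lemma rep (t : SpecM op ng c) x :
  v (q (proj1_sig t) (G x)) = v (f_S (canon_frame op ng c G) (nat_emb op ng c x) t).
Proof.
  destruct t as [F HF]. simpl. unfold f_S, nat_emb.
  set (phi := v (q F (G x))).
  assert (Hphi : 0 <= phi <= 1) by apply vr.
  apply Rle_antisym.
  - apply Iinf_glb. lra. intros [F' HF']. rewrite imp_val. simpl.
    unfold canon_frame. simpl.
    pose proof (Iinf_lb (fun a => i_imp (q F (G a)) (q F' a)) x). cbv beta in H0. rewrite imp_val in H0. fold phi in H0.
    pose proof (vr (q F' x)).
    pose proof (vr (Iinf (fun a => i_imp (q F (G a)) (q F' a)))).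
    unfold Rmin in *; repeat destruct Rle_dec; lra.
  - set (inf := v (Iinf _)). apply Rnot_lt_le. intro Hlt.
    assert (Hinf : inf <= 1) by apply vr.
    destruct (rat_dense phi inf) as [r [Hr1 Hr2]]; try lra.
    set (y := imp (c r) x).
    pose proof (qh A op ng c HP HS F HF) as Hh.
    assert (Hy : v (q F (G y)) < 1).
    { unfold y. rewrite <- PT2G, (h_imp HP Hh), (h_c HP Hh). fold phi. unfold Rmin; destruct Rle_dec; lra. }
    destruct (KEY F y HF Hy) as [Mx [dl [HMx [Hdl Hall]]]].
    pose proof (qh A op ng c HP HS Mx HMx) as Hm.
    set (s := exist _ Mx HMx : SpecM op ng c).
    assert (HR : v (q Mx y) + dl <= v (canon_frame op ng c G s (exist _ F HF))).
    { unfold canon_frame. simpl. apply Iinf_glb.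
      eapply Rle_trans. apply (Hall x). rewrite imp_val. apply Rmin_r. apply Hall. }
    pose proof (Iinf_lb (fun s0 : SpecM op ng c => i_imp (canon_frame op ng c G s0 (exist _ F HF)) (q (proj1_sig s0) x)) s) as Hl.
    cbv beta in Hl. fold inf in Hl. rewrite imp_val in Hl. simpl in Hl.
    assert (Hl' : inf <= Rmin (1 - v (canon_frame op ng c G s (exist _ F HF)) + v (q Mx x)) 1) by exact Hl.
    clear Hl.
    unfold y in HR. rewrite (h_imp HP Hm), (h_c HP Hm) in HR.
    pose proof (vr (canon_frame op ng c G s (exist _ F HF))).
    pose proof (vr (q Mx x)). pose proof (rr r).
    unfold Rmin in *; repeat destruct Rle_dec; lra.
Qed.

Lemma canon_sym (s t : SpecM op ng c) :
  v (canon_frame op ng c H s t) = v (canon_frame op ng c G t s).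
Proof.
  destruct s as [S HS'], t as [T HT']. unfold canon_frame; simpl.
  pose proof (qh A op ng c HP HS S HS') as Hs. pose proof (qh A op ng c HP HS T HT') as Ht.
  apply Rle_antisym; apply Iinf_le_ex.
  - intro a. exists (ng (G a)). rewrite !imp_val.
    assert (le (ng a) (H (ng (G a)))).
    { apply (neg_anti' M). rewrite (A4 M). apply PT3a. }
    apply (h_mono HP Ht) in H0. rewrite (h_ng HP Ht) in H0. rewrite (h_ng HP Hs).
    pose proof (vr (q T a)); pose proof (vr (q S (G a))); pose proof (vr (q T (H (ng (G a))))).
    unfold Rmin in *; repeat destruct Rle_dec; lra.
  - intro b. exists (ng (H b)). rewrite !imp_val.
    assert (le (ng b) (G (ng (H b)))).
    { apply (neg_anti' M). rewrite (A4 M). apply PT3b. }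
    apply (h_mono HP Hs) in H0. rewrite (h_ng HP Hs) in H0. rewrite (h_ng HP Ht).
    pose proof (vr (q S b)); pose proof (vr (q T (H b))); pose proof (vr (q S (G (ng (H b))))).
    unfold Rmin in *; repeat destruct Rle_dec; lra.
Qed.
End Tense.

Open Scope R_scope.

Theorem theorem11 :
  (* (i) *)
  (forall (T : Type) (R : T -> T -> I01),
     is_tense_pavelka (pw_oplus T) (pw_neg T) (pw_const T) (f_S R) (f_S (Rinv_frame R))) /\
  (* (ii) *)
  (forall (A : Type) (oplus : A -> A -> A) (neg : A -> A) (c : rat01 -> A) (G H : A -> A),
     is_tense_pavelka oplus neg c G H ->
     semisimple oplus neg (c q0) ->
     pavelka_hom oplus neg c
       (pw_oplus (SpecM oplus neg c)) (pw_neg (SpecM oplus neg c)) (pw_const (SpecM oplus neg c))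
       (nat_emb oplus neg c) /\
     (forall x y, nat_emb oplus neg c x = nat_emb oplus neg c y -> x = y) /\
     (forall x, nat_emb oplus neg c (G x) = f_S (canon_frame oplus neg c G) (nat_emb oplus neg c x)) /\
     (forall x, nat_emb oplus neg c (H x) =
                f_S (Rinv_frame (canon_frame oplus neg c G)) (nat_emb oplus neg c x))).
Proof.
  split. intros T R. apply part_i.
  intros A op ng c G H HT HS. pose proof (proj1 HT) as HP.
  split; [|split; [|split]].
  - split; [|split].
    + intros x y. apply functional_extensionality; intro t. unfold nat_emb, pw_oplus.
      apply (proj1 (qh A op ng c HP HS (proj1_sig t) (proj2_sig t))).
    + intros x. apply functional_extensionality; intro t. unfold nat_emb, pw_neg.
      apply (proj1 (proj2 (qh A op ng c HP HS (proj1_sig t) (proj2_sig t)))).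
    + intros r. apply functional_extensionality; intro t. unfold nat_emb, pw_const.
      apply (proj2 (proj2 (qh A op ng c HP HS (proj1_sig t) (proj2_sig t)))).
  - intros x y E. apply (sep_eq A op ng c HP HS). intros F HF.
    pose proof (equal_f E (exist _ F HF)) as e. unfold nat_emb in e. simpl in e. rewrite e. reflexivity.
  - intro x. apply functional_extensionality; intro t. apply I01_eq. apply (rep A op ng c G H HT HS).
  - intro x. apply functional_extensionality; intro t. apply I01_eq.
    unfold nat_emb at 1. rewrite (rep A op ng c H G (tense_swap op ng c G H HT) HS t x).
    unfold f_S, Rinv_frame. apply Rle_antisym; apply Iinf_mono; intro s; rewrite !imp_val;
    rewrite (canon_sym A op ng c G H HT HS s t); lra.
Qed.
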